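(* Let $X$, $Y$ be real Banach spaces, let $\Omega$ be a measure space, $Z:=L^2(\Omega)$, and let $e:Y\to Z$ be a linear continuous dense embedding. Let $f:X\to\mathbb{R}$ and $g:X\to Y$, and consider the problem $\min f(x)$ s.t. $g(x)\le 0$. Assume that $f$ and $x\mapsto\|g_+(x)\|_Z$ are weakly lower semicontinuous on $X$. Let $(x^k)$ be a sequence generated by the augmented Lagrangian algorithm described in the context, where in Step 2 the iterate $x^{k+1}$ is chosen such that there is a sequence $\varepsilon_k\downarrow 0$ with $L_{\rho_k}(x^{k+1},w^k)\le L_{\rho_k}(x,w^k)+\varepsilon_k$ for all $x\in X$ and all $k\in\mathbb{N}$. Let $\bar x$ be a weak limit point of $(x^k)$. Then: (a) $\bar x$ is a global minimizer of the function $x\mapsto\|g_+(x)\|_Z^2$ on $X$; (b) if $\bar x$ is feasible (i.e. $g(\bar x)\le 0$), then $\bar x$ is a (global) solution of $\min f(x)$ s.t. $g(x)\le 0$.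
   Context: The order on $Y$ is induced by $Z$: $y\le 0$ in $Y$ means $e(y)\le 0$ a.e. on $\Omega$. For $z\in Z$, $z_+:=\max\{z,0\}$, $z_-:=\max\{-z,0\}$ (pointwise); for $x\in X$, $g_+(x):=(e(g(x)))_+$, and $\min$ of elements of $Z$ is pointwise. $\langle\cdot,\cdot\rangle$ is the inner product of $Z$. The augmented Lagrangian is $L_\rho(x,\lambda):=f(x)+\frac{\rho}{2}\big\|\big(g(x)+\frac{\lambda}{\rho}\big)_+\big\|_Z^2$ for $x\in X$, $\lambda\in Z$, $\rho>0$ (with $g(x)$ viewed in $Z$ via $e$). Algorithm: (S.0) Choose $(x^0,\lambda^0)\in X\times Z$, $\rho_0>0$, $w^{\max}\in Z$ with $w^{\max}\ge 0$ a.e., $\gamma>1$, $\tau\in(0,1)$; set $k=0$. (S.2) Choose $w^k\in Z$ with $0\le w^k\le w^{\max}$ a.e. and compute an approximate minimizer $x^{k+1}$ of $x\mapsto L_{\rho_k}(x,w^k)$ over $X$. (S.3) Set $\lambda^{k+1}:=(w^k+\rho_k g(x^{k+1}))_+$. If $k=0$ or $\big\|\min\{-g(x^{k+1}),w^k/\rho_k\}\big\|_Z\le\tau\big\|\min\{-g(x^k),w^{k-1}/\rho_{k-1}\}\big\|_Z$, set $\rho_{k+1}:=\rho_k$; otherwise set $\rho_{k+1}:=\gamma\rho_k$. (S.4) Set $k\leftarrow k+1$ and go to (S.2). The algorithm is run without stopping, producing infinite sequences. *)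

(* Defs.v *)
From HB Require Import structures.
From mathcomp Require Import all_boot all_order all_algebra.
From mathcomp Require Import all_classical all_reals all_analysis.
Set Implicit Arguments. Unset Strict Implicit. Unset Printing Implicit Defensive.
Import Order.TTheory GRing.Theory Num.Theory.
Import numFieldNormedType.Exports.
Local Open Scope classical_set_scope.
Local Open Scope ring_scope.

Section L2.
Context {R : realType} {d : measure_display} {T : measurableType d}
  (mu : {measure set T -> \bar R}).

(* Elements of Z = L^2(Omega) are represented by functions T -> R;
   membership in L^2: measurable and square integrable. *)
Definition inL2 (z : T -> R) : Prop :=
  measurable_fun setT z /\ (\int[mu]_t ((z t) ^+ 2)%:E < +oo)%E.

Definition normZ (z : T -> R) : R :=
  Num.sqrt (fine (\int[mu]_t ((z t) ^+ 2)%:E)).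

Definition pospart (z : T -> R) : T -> R := fun t => Num.max (z t) 0.

Definition minZ (z1 z2 : T -> R) : T -> R := fun t => Num.min (z1 t) (z2 t).

Definition nonposZ (z : T -> R) : Prop := {ae mu, forall t, z t <= 0}.

End L2.

Section Weak.
Context {R : realType} {X : normedModType R}.

Definition cont_lin_functional (l : X -> R) : Prop :=
  (forall (a : R) (u v : X), l (a *: u + v) = a * l u + l v) /\ continuous l.

Definition weak_cvg (u : nat -> X) (x : X) : Prop :=
  forall l : X -> R, cont_lin_functional l -> l \o u @ \oo --> l x.

(* weak (sequential) lower semicontinuity:
   h x <= liminf h (u n) whenever u converges weakly to x *)
Definition weakly_lsc (h : X -> R) : Prop :=
  forall (u : nat -> X) (x : X), weak_cvg u x ->
    forall t : R, t < h x -> \forall n \near \oo, t < h (u n).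

Definition weak_limit_point (u : nat -> X) (x : X) : Prop :=
  exists phi : nat -> nat, (forall n, (phi n < phi n.+1)%N) /\ weak_cvg (u \o phi) x.

End Weak.

Section ALM.
Context {R : realType} {d : measure_display} {T : measurableType d}
  (mu : {measure set T -> \bar R}) {X : normedModType R}.

(* augmented Lagrangian L_rho(x, lambda) = f x + rho/2 ||(G x + lambda/rho)_+||^2,
   where G = e o g is g viewed in Z *)
Definition aug_lag (f : X -> R) (G : X -> T -> R) (rho : R) (x : X)
  (lam : T -> R) : R :=
  f x + rho / 2 * normZ mu (pospart (fun t => G x t + lam t / rho)) ^+ 2.

Definition ALM_sequences (f : X -> R) (G : X -> T -> R)
  (rho0 : R) (wmax : T -> R) (gamma tau : R)
  (x : nat -> X) (lam : nat -> T -> R) (rho : nat -> R)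
  (w : nat -> T -> R) (eps : nat -> R) : Prop :=
  (
      inL2 mu (lam 0%N) /\ 0 < rho0 /\ rho 0%N = rho0 /\ inL2 mu wmax /\
      {ae mu, forall t, 0 <= wmax t} /\ 1 < gamma /\ 0 < tau < 1)
  /\
  (
      (forall k, inL2 mu (w k) /\ {ae mu, forall t, 0 <= w k t <= wmax t}) /\
      (forall k (y : X), aug_lag f G (rho k) (x k.+1) (w k)
                          <= aug_lag f G (rho k) y (w k) + eps k) /\
      (forall k, eps k.+1 <= eps k) /\ eps @ \oo --> (0 : R) /\
      (forall k, lam k.+1 = pospart (fun t => w k t + rho k * G (x k.+1) t)) /\
      (forall k,
        let V := fun j : nat =>
          normZ mu (minZ (fun t => - G (x j) t) (fun t => w j.-1 t / rho j.-1)) in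
        rho k.+1 = if (k == 0%N) || (V k.+1 <= tau * V k)
                   then rho k else gamma * rho k)).

End ALM.

(* Main.v *)
Require Import Defs.
From HB Require Import structures.
From mathcomp Require Import all_boot all_order all_algebra.
From mathcomp Require Import all_classical all_reals all_analysis.
From mathcomp Require Import ring lra zify measurable_realfun.
Import Order.TTheory GRing.Theory Num.Theory.
Import numFieldNormedType.Exports.
Local Open Scope classical_set_scope.
Local Open Scope ring_scope.

Section PW.
Context {R : realType}.
Implicit Types (p q u g w wm rho dl : R).

Lemma sqD_le p q dl : 0 < dl ->
  (p + q) ^+ 2 <= (1 + dl) * p ^+ 2 + (1 + dl^-1) * q ^+ 2.
Proof.
move=> d0.
have h : 0 <= (dl * p - q) ^+ 2 / dl by apply: divr_ge0; [exact: sqr_ge0|exact: ltW].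
have e : (1 + dl) * p ^+ 2 + (1 + dl^-1) * q ^+ 2 - (p + q) ^+ 2 = (dl * p - q) ^+ 2 / dl.
  by field; rewrite gt_eqF.
by rewrite -subr_ge0 e.
Qed.

Lemma P1 g u : 0 <= u -> Num.max g 0 ^+ 2 <= 1 * Num.min (- g) u ^+ 2 + 0 * 0 ^+ 2.
Proof.
move=> u0; rewrite mul1r mul0r addr0.
have [hg|hg] := leP g 0; first by rewrite expr0n /= sqr_ge0.
have [h|h] := leP (- g) u; first by rewrite sqrrN.
lra.
Qed.

Lemma P2 g u : 0 <= u -> Num.max g 0 ^+ 2 <= 1 * Num.max (g + u) 0 ^+ 2 + 0 * 0 ^+ 2.
Proof.
move=> u0; rewrite mul1r mul0r addr0.
have [hg|hg] := leP g 0; first by rewrite expr0n /= sqr_ge0.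
have [h|h] := leP (g + u) 0; first lra.
rewrite ler_sqr ?nnegrE; lra.
Qed.

Lemma P3 g w wm rho dl : 0 <= w -> w <= wm -> 0 < rho -> 0 < dl ->
  Num.max (g + w / rho) 0 ^+ 2 <=
  (1 + dl) * Num.max g 0 ^+ 2 + ((1 + dl^-1) / rho ^+ 2) * wm ^+ 2.
Proof.
move=> w0 wwm r0 d0.
have hq : w / rho <= wm / rho by rewrite ler_pM2r ?invr_gt0.
have hq0 : 0 <= w / rho by rewrite divr_ge0 // ltW.
have hle : Num.max (g + w / rho) 0 <= Num.max g 0 + wm / rho /\ 0 <= Num.max (g + w / rho) 0.
  have [hg|hg] := leP g 0; have [h|h] := leP (g + w / rho) 0; lra.
have : Num.max (g + w / rho) 0 ^+ 2 <= (Num.max g 0 + wm / rho) ^+ 2.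
  by case: hle => h1 h2; rewrite ler_sqr ?nnegrE //; lra.
move/le_trans; apply.
have -> : ((1 + dl^-1) / rho ^+ 2) * wm ^+ 2 = (1 + dl^-1) * (wm / rho) ^+ 2.
  by rewrite expr_div_n; field; rewrite !gt_eqF.
exact: (sqD_le _ _ _ d0).
Qed.

Lemma P4 g u : g <= 0 -> 0 <= u -> Num.max (g + u) 0 ^+ 2 <= 1 * u ^+ 2 + 0 * 0 ^+ 2.
Proof.
move=> hg u0; rewrite mul1r mul0r addr0.
have [h|h] := leP (g + u) 0; first by rewrite expr0n /= sqr_ge0.
rewrite ler_sqr ?nnegrE; lra.
Qed.

Lemma P5 g u dl : 0 < dl ->
  u ^+ 2 <= (1 + dl) * Num.max (g + u) 0 ^+ 2 + (1 + dl^-1) * Num.min (- g) u ^+ 2.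
Proof.
move=> d0; have := sqD_le (Num.max (g + u) 0) (Num.min (- g) u) _ d0.
have -> : Num.max (g + u) 0 + Num.min (- g) u = u.
  by have [h|h] := leP (- g) u; have [h'|h'] := leP (g + u) 0; lra.
done.
Qed.

Lemma P6 w wm rho : 0 <= w -> w <= wm -> 0 < rho ->
  (w / rho) ^+ 2 <= (rho ^+ 2)^-1 * wm ^+ 2 + 0 * 0 ^+ 2.
Proof.
move=> w0 wwm r0; rewrite mul0r addr0 expr_div_n [X in X <= _]mulrC ler_pM2l ?invr_gt0 ?exprn_gt0 //.
by rewrite ler_sqr ?nnegrE //; apply: le_trans wwm.
Qed.

Lemma Pmin g u rho : Num.min (- g) (u / rho) ^+ 2 <= 1 * g ^+ 2 + (rho ^+ 2)^-1 * u ^+ 2.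
Proof.
rewrite mul1r.
have H : forall a b : R, Num.min a b ^+ 2 <= a ^+ 2 + b ^+ 2.
  move=> a b; have [h|h] := leP a b.
    by rewrite lerDl sqr_ge0.
  by rewrite lerDr sqr_ge0.
by apply: le_trans (H _ _) _; rewrite sqrrN expr_div_n mulrC.
Qed.

Lemma Ppos g u rho : Num.max (g + u / rho) 0 ^+ 2 <= 2 * g ^+ 2 + (2 / rho ^+ 2) * u ^+ 2.
Proof.
have [h|h] := leP (g + u / rho) 0.
  rewrite expr0n /=; apply: addr_ge0; apply: mulr_ge0 => //; try exact: sqr_ge0.
  by apply: divr_ge0 => //; exact: sqr_ge0.
have -> : (2 / rho ^+ 2) * u ^+ 2 = (1 + 1^-1) * (u / rho) ^+ 2.
  by rewrite invr1 expr_div_n; ring.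
have -> : 2 * g ^+ 2 = (1 + 1) * g ^+ 2 by ring.
exact: (sqD_le _ _ _ ltr01).
Qed.

Lemma sq_le (a b : R) : 0 <= a -> 0 <= b -> a ^+ 2 <= b ^+ 2 -> a <= b.
Proof. by move=> a0 b0; rewrite ler_sqr ?nnegrE. Qed.

End PW.

Lemma natfacts (a b c d p : nat) : ((a + b + c + d).+1 <= p)%N ->
  [/\ (a <= (a + b + c + d).+1)%N, (b <= p)%N, (c <= p)%N, (d <= p.-1)%N & p = p.-1.+1].
Proof. move=> h; split; lia. Qed.

Lemma natfacts2 (a b d p : nat) : ((a + b + d).+1 <= p)%N ->
  [/\ (a <= (a + b + d).+1)%N, (b <= (a + b + d).+1)%N, (d <= p.-1)%N & p = p.-1.+1].
Proof. move=> h; split; lia. Qed.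

Lemma natfacts3 (a b d p : nat) : ((a + b + d).+1 <= p)%N ->
  [/\ (a <= (a + b + d).+1)%N, (b <= p.-1)%N, (d <= p.-1)%N & p = p.-1.+1].
Proof. move=> h; split; lia. Qed.

Section H.
Context {R : realType} {d : measure_display} {T : measurableType d}
  (mu : {measure set T -> \bar R}).

Lemma int_sq_ge0 (z : T -> R) : (0 <= \int[mu]_t ((z t) ^+ 2)%:E)%E.
Proof. by apply: integral_ge0 => t _; rewrite lee_fin sqr_ge0. Qed.

Lemma normZ_sq (z : T -> R) : normZ mu z ^+ 2 = fine (\int[mu]_t ((z t) ^+ 2)%:E).
Proof. by rewrite /normZ sqr_sqrtr // fine_ge0 // int_sq_ge0. Qed.

Lemma normZ_ge0 (z : T -> R) : 0 <= normZ mu z.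
Proof. exact: sqrtr_ge0. Qed.

Lemma msq (z : T -> R) : measurable_fun setT z ->
  measurable_fun setT (fun t => ((z t) ^+ 2)%:E : \bar R).
Proof. by move=> mz; apply/measurable_EFinP; apply: measurable_funX. Qed.

Lemma L2fin (a : T -> R) : inL2 mu a ->
  (\int[mu]_t ((a t) ^+ 2)%:E = (fine (\int[mu]_t ((a t) ^+ 2)%:E))%:E)%E.
Proof.
move=> [_ ha]; rewrite fineK // ge0_fin_numE //; exact: int_sq_ge0.
Qed.

Lemma master {z a b : T -> R} {c1 c2 : R} :
  measurable_fun setT z -> inL2 mu a -> inL2 mu b -> 0 <= c1 -> 0 <= c2 ->
  {ae mu, forall t, z t ^+ 2 <= c1 * a t ^+ 2 + c2 * b t ^+ 2} ->
  inL2 mu z /\ normZ mu z ^+ 2 <= c1 * normZ mu a ^+ 2 + c2 * normZ mu b ^+ 2.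
Proof.
move=> mz ha hb c10 c20 hae.
have le1 : (\int[mu]_t ((z t) ^+ 2)%:E <=
   \int[mu]_t (c1%:E * ((a t) ^+ 2)%:E + c2%:E * ((b t) ^+ 2)%:E))%E.
  apply: ae_ge0_le_integral => //.
  - by move=> t _; rewrite lee_fin sqr_ge0.
  - exact: msq.
  - by move=> t _; rewrite -!EFinM -EFinD lee_fin addr_ge0 // mulr_ge0 // sqr_ge0.
  - apply: emeasurable_funD; apply: emeasurable_funM => //; exact: msq ha.1 || exact: msq hb.1.
  - by apply: filterS hae => t h _; rewrite -!EFinM -EFinD lee_fin.
have eq1 : (\int[mu]_t (c1%:E * ((a t) ^+ 2)%:E + c2%:E * ((b t) ^+ 2)%:E) =
   c1%:E * \int[mu]_t ((a t) ^+ 2)%:E + c2%:E * \int[mu]_t ((b t) ^+ 2)%:E)%E.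
  rewrite ge0_integralD //.
  - rewrite ge0_integralZl // ?lee_fin //; first rewrite ge0_integralZl // ?lee_fin //.
    + exact: msq hb.1.
    + by move=> t _; rewrite lee_fin sqr_ge0.
    + exact: msq ha.1.
    + by move=> t _; rewrite lee_fin sqr_ge0.
  - by move=> t _; rewrite -EFinM lee_fin mulr_ge0 // sqr_ge0.
  - apply: emeasurable_funM => //; exact: msq ha.1.
  - by move=> t _; rewrite -EFinM lee_fin mulr_ge0 // sqr_ge0.
  - apply: emeasurable_funM => //; exact: msq hb.1.
rewrite eq1 (@L2fin a ha) (@L2fin b hb) -!EFinM -EFinD in le1.
have hz : (\int[mu]_t ((z t) ^+ 2)%:E < +oo)%E.
  by apply: le_lt_trans le1 _; exact: ltey.
split; first by split.
rewrite !normZ_sq -lee_fin fineK //; last by rewrite ge0_fin_numE ?int_sq_ge0.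
Qed.

Lemma inL2_0 : inL2 mu (fun _ => 0).
Proof.
split; first exact: measurable_cst.
rewrite (_ : (fun t => ((0 : R) ^+ 2)%:E) = cst 0%E); last by apply/funext => t; rewrite expr0n.
by rewrite integral0 ltey.
Qed.

Lemma mpos {a : T -> R} : measurable_fun setT a -> measurable_fun setT (pospart a).
Proof. by move=> ma; exact: (measurable_maxr ma (measurable_cst _)). Qed.

Lemma mdiv {a : T -> R} (c : R) : measurable_fun setT a -> measurable_fun setT (fun t => a t / c).
Proof. by move=> ma; exact: (measurable_funM ma (measurable_cst _)). Qed.

Lemma madd {a b : T -> R} : measurable_fun setT a -> measurable_fun setT b ->
  measurable_fun setT (fun t => a t + b t).
Proof. by move=> ma mb; exact: (measurable_funD ma mb). Qed.

Lemma mmin {a b : T -> R} : measurable_fun setT a -> measurable_fun setT b ->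
  measurable_fun setT (minZ (fun t => - a t) b).
Proof. by move=> ma mb; exact: (measurable_minr (measurable_funN ma) mb). Qed.

Lemma L2div (w : T -> R) c : inL2 mu w -> inL2 mu (fun t => w t / c).
Proof.
move=> hw.
have c0 : 0 <= (c ^+ 2)^-1 by rewrite invr_ge0 sqr_ge0.
have hae : {ae mu, forall t, (w t / c) ^+ 2 <= (c ^+ 2)^-1 * w t ^+ 2 + 0 * ((fun _ => 0 : R) t) ^+ 2}.
  by apply: aeW => t; rewrite mul0r addr0 expr_div_n mulrC.
exact: (proj1 (master (mdiv c hw.1) hw inL2_0 c0 (lexx 0) hae)).
Qed.

Lemma L2pos (a w : T -> R) c : inL2 mu a -> inL2 mu w ->
  inL2 mu (pospart (fun t => a t + w t / c)).
Proof.
move=> ha hw.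
have c0 : 0 <= 2 / c ^+ 2 by rewrite divr_ge0 // sqr_ge0.
have hae : {ae mu, forall t, pospart (fun t => a t + w t / c) t ^+ 2 <= 2 * a t ^+ 2 + (2 / c ^+ 2) * w t ^+ 2}.
  by apply: aeW => t; exact: Ppos.
exact: (proj1 (master (mpos (madd ha.1 (mdiv c hw.1))) ha hw (ler0n _ 2) c0 hae)).
Qed.

Lemma L2pos0 (a : T -> R) : inL2 mu a -> inL2 mu (pospart a).
Proof.
move=> ha.
have hae : {ae mu, forall t, pospart a t ^+ 2 <= 1 * a t ^+ 2 + 0 * ((fun _ => 0 : R) t) ^+ 2}.
  apply: aeW => t; rewrite mul1r mul0r addr0 /pospart.
  have [h|h] := leP (a t) 0; last by [].
  by rewrite expr0n /= sqr_ge0.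
exact: (proj1 (master (mpos ha.1) ha inL2_0 ler01 (lexx 0) hae)).
Qed.

Lemma L2min (a w : T -> R) c : inL2 mu a -> inL2 mu w ->
  inL2 mu (minZ (fun t => - a t) (fun t => w t / c)).
Proof.
move=> ha hw.
have c0 : 0 <= (c ^+ 2)^-1 by rewrite invr_ge0 sqr_ge0.
have hae : {ae mu, forall t, minZ (fun t => - a t) (fun t => w t / c) t ^+ 2 <= 1 * a t ^+ 2 + (c ^+ 2)^-1 * w t ^+ 2}.
  by apply: aeW => t; exact: Pmin.
exact: (proj1 (master (mmin ha.1 (mdiv c hw.1)) ha hw ler01 c0 hae)).
Qed.

End H.

Theorem theorem4p2 (R : realType)
  (X Y : completeNormedModType R)
  (d : measure_display) (T : measurableType d) (mu : {measure set T -> \bar R})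
  (e : Y -> T -> R)
  (* e : Y -> Z = L^2(Omega) linear *)
  (e_L2 : forall y, inL2 mu (e y))
  (e_lin : forall (a : R) (y1 y2 : Y),
      {ae mu, forall t, e (a *: y1 + y2) t = a * e y1 t + e y2 t})
  (* continuous *)
  (e_cont : forall (y : Y) (eta : R), 0 < eta ->
      exists2 delta : R, 0 < delta &
        forall y' : Y, `|y' - y| < delta -> normZ mu (fun t => e y' t - e y t) < eta)
  (* injective (embedding) *)
  (e_inj : forall y1 y2 : Y, {ae mu, forall t, e y1 t = e y2 t} -> y1 = y2)
  (* dense range *)
  (e_dense : forall z : T -> R, inL2 mu z -> forall eta : R, 0 < eta ->
      exists y : Y, normZ mu (fun t => e y t - z t) < eta)
  (f : X -> R) (g : X -> Y)
  (f_wlsc : weakly_lsc f)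
  (gp_wlsc : weakly_lsc (fun x => normZ mu (pospart (e (g x)))))
  (rho0 : R) (wmax : T -> R) (gamma tau : R)
  (x : nat -> X) (lam : nat -> T -> R) (rho : nat -> R)
  (w : nat -> T -> R) (eps : nat -> R)
  (alg : ALM_sequences mu f (fun y => e (g y)) rho0 wmax gamma tau x lam rho w eps)
  (xbar : X) (hxbar : weak_limit_point x xbar) :
  (forall y : X, normZ mu (pospart (e (g xbar))) ^+ 2
                 <= normZ mu (pospart (e (g y))) ^+ 2)
  /\
  (nonposZ mu (e (g xbar)) ->
     forall y : X, nonposZ mu (e (g y)) -> f xbar <= f y).
Proof.
case: alg => [[hlam0 [rho0p [hrho0 [hwmax [hwmax0 [hgam htau]]]]]] [hw [hmin [hepsd [hepsc [hlam hrho]]]]]].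
move/andP: htau => [tau0 tau1].
case: hxbar => phi [phiS hphi].
have hGL2 y : inL2 mu (e (g y)) := e_L2 (g y).
have rhoS k : rho k.+1 = rho k \/ rho k.+1 = gamma * rho k.
  by move: (hrho k) => /=; case: ifP => _ ->; [left|right].
have gam0 : 0 < gamma by apply: lt_trans hgam.
have rhopos k : 0 < rho k.
  elim: k => [|k IH]; first by rewrite hrho0.
  by case: (rhoS k) => ->; [|rewrite mulr_gt0].
have rhomon k : rho k <= rho k.+1.
  case: (rhoS k) => ->; first by [].
  have := rhopos k; nra.
have rhomono i j : (i <= j)%N -> rho i <= rho j.
  move=> /subnKC <-; elim: (j - i)%N => [|m IH]; first by rewrite addn0.
  by apply: le_trans IH _; rewrite addnS.
have rhoge k : rho0 <= rho k by rewrite -hrho0; exact: rhomono.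
have epsle k : eps k <= eps 0%N.
  elim: k => [//|k IH]; exact: le_trans (hepsd k) IH.
have phige n : (n <= phi n)%N.
  elim: n => [//|n IH]; exact: leq_ltn_trans IH (phiS n).
pose P k z := normZ mu (pospart (fun t => e (g z) t + w k t / rho k)) ^+ 2.
have key k z : f (x k.+1) + rho k / 2 * P k (x k.+1) <= f z + rho k / 2 * P k z + eps k.
  exact: hmin k z.
pose V j := normZ mu (minZ (fun t => - e (g (x j)) t) (fun t => w j.-1 t / rho j.-1)).
have hV k : (0 < k)%N -> rho k.+1 = rho k -> V k.+1 <= tau * V k.
  move=> k0; move: (hrho k) => /=; case: ifP.
    by move=> /orP [/eqP k0'|h] _ _; [move: k0; rewrite k0'|exact: h].
  move=> _ -> h; have := rhopos k; nra.
have Vge0 j : 0 <= V j by exact: normZ_ge0.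
have M := @master R d T mu.
have L20 := inL2_0 mu.
have hwL2 k : inL2 mu (w k) := (hw k).1.
have wae k : {ae mu, forall t, 0 <= w k t <= wmax t} := (hw k).2.
pose W := normZ mu wmax ^+ 2.
have W0 : 0 <= W by rewrite sqr_ge0.
pose U k := normZ mu (fun t => w k t / rho k) ^+ 2.
have N1 j : (0 < j)%N -> normZ mu (pospart (e (g (x j)))) <= V j.
  move=> j0.
  have := M (pospart (e (g (x j)))) _ (fun _ => 0) 1 0 (mpos (hGL2 (x j)).1)
    (L2min mu _ _ (rho j.-1) (hGL2 (x j)) (hwL2 j.-1)) L20 ler01 (lexx 0).
  case.
    apply: filterS (wae j.-1) => t /andP [h1 _]; apply: P1.
    by rewrite divr_ge0 // ltW.
  move=> _; rewrite mul1r mul0r addr0 => h.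
  by apply: sq_le => //; exact: normZ_ge0.
have N2 k z : normZ mu (pospart (e (g z))) ^+ 2 <= P k z.
  have := M (pospart (e (g z))) _ (fun _ => 0) 1 0 (mpos (hGL2 z).1)
    (L2pos mu _ _ (rho k) (hGL2 z) (hwL2 k)) L20 ler01 (lexx 0).
  case.
    apply: filterS (wae k) => t /andP [h1 _]; apply: P2.
    by rewrite divr_ge0 // ltW.
  by move=> _; rewrite mul1r mul0r addr0.
have N3 k z dl : 0 < dl -> P k z <= (1 + dl) * normZ mu (pospart (e (g z))) ^+ 2
     + ((1 + dl^-1) / rho k ^+ 2) * W.
  move=> d0.
  have := M _ (pospart (e (g z))) wmax (1 + dl) ((1 + dl^-1) / rho k ^+ 2)
    (mpos (madd (hGL2 z).1 (mdiv (rho k) (hwL2 k).1)))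
    (L2pos0 mu _ (hGL2 z)) hwmax.
  case.
  - by rewrite addr_ge0 // ltW.
  - by rewrite divr_ge0 ?sqr_ge0 // addr_ge0 // invr_ge0 ltW.
  - apply: filterS (wae k) => t /andP [h1 h2]; exact: P3.
  - by [].
have N4 k z : nonposZ mu (e (g z)) -> P k z <= U k.
  move=> hz.
  have := M _ (fun t => w k t / rho k) (fun _ => 0) 1 0
    (mpos (madd (hGL2 z).1 (mdiv (rho k) (hwL2 k).1)))
    (L2div mu _ (rho k) (hwL2 k)) L20 ler01 (lexx 0).
  case.
    apply: filterS2 hz (wae k) => t h1 /andP [h2 _]; apply: P4 => //.
    by rewrite divr_ge0 // ltW.
  by move=> _; rewrite mul1r mul0r addr0.
have N5 k dl : 0 < dl -> U k <= (1 + dl) * P k (x k.+1) + (1 + dl^-1) * V k.+1 ^+ 2.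
  move=> d0.
  have := M (fun t => w k t / rho k) _ _ (1 + dl) (1 + dl^-1)
    (mdiv (rho k) (hwL2 k).1)
    (L2pos mu _ _ (rho k) (hGL2 (x k.+1)) (hwL2 k)) (L2min mu _ _ (rho k) (hGL2 (x k.+1)) (hwL2 k)).
  case.
  - by rewrite addr_ge0 // ltW.
  - by rewrite addr_ge0 // invr_ge0 ltW.
  - by apply: aeW => t; exact: P5.
  - by [].
have N6 k : U k <= (rho k ^+ 2)^-1 * W.
  have := M (fun t => w k t / rho k) wmax (fun _ => 0) ((rho k ^+ 2)^-1) 0
    (mdiv (rho k) (hwL2 k).1) hwmax L20.
  case.
  - by rewrite invr_ge0 sqr_ge0.
  - by [].
  - apply: filterS (wae k) => t /andP [h1 h2]; exact: P6.
  by move=> _; rewrite mul0r addr0.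
have [[Mb hM]|unb] := pselect (exists Mb, forall k, rho k <= Mb).
-
  have [K hK] : exists K, forall k, (K <= k)%N -> rho k.+1 = rho k.
    apply: contrapT => nK.
    have grow m : exists k, rho0 * (1 + m%:R * (gamma - 1)) <= rho k.
      elim: m => [|m [k hk]]; first by exists 0%N; rewrite hrho0 mul0r addr0 mulr1.
      have : ~ (forall j, (k <= j)%N -> rho j.+1 = rho j) by move=> h; apply: nK; exists k.
      move=> /existsNP [j /not_implyP [hkj hj]].
      have hj' : rho j.+1 = gamma * rho j by case: (rhoS j).
      exists j.+1; rewrite hj' -natr1.
      have h1 := rhomono k j hkj; have h2 := rhoge j.
      have h3 : 0 <= (gamma - 1) * (rho j - rho0) by rewrite mulr_ge0 // subr_ge0 // ltW.
      nra.
    have hx : 0 <= Mb / (rho0 * (gamma - 1)).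
      rewrite divr_ge0 //; last by rewrite mulr_ge0 // ?subr_ge0 ?ltW.
      exact: le_trans (ltW (rhopos 0%N)) (hM 0%N).
    have [k hk] := grow (Num.Def.archi_bound (Mb / (rho0 * (gamma - 1)))).
    have := archi_boundP hx; set m := (Num.Def.archi_bound _)%:R => hm.
    have hpos : 0 < rho0 * (gamma - 1) by rewrite mulr_gt0 // subr_gt0.
    move: hm; rewrite ltr_pdivrMr // => hm.
    have := hM k; nra.
  pose K1 := maxn K 1.
  have hVd k : (K1 <= k)%N -> V k.+1 <= tau * V k.
    move=> hk; apply: hV.
      by apply: leq_trans hk; rewrite leq_maxr.
    by apply: hK; apply: leq_trans hk; rewrite leq_maxl.
  have hVgeo m : V (K1 + m)%N <= tau ^+ m * V K1.
    elim: m => [|m IH]; first by rewrite addn0 expr0 mul1r.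
    rewrite addnS; apply: le_trans (hVd _ (leq_addr _ _)) _.
    rewrite exprS -mulrA ler_pM2l //.
  have Vmon k : (K1 <= k)%N -> V k.+1 <= V k.
    move=> hk; have := hVd k hk; have := Vge0 k; nra.
  have Vmono m i : V (K1 + m + i)%N <= V (K1 + m)%N.
    elim: i => [|i IH]; first by rewrite addn0.
    rewrite addnS; apply: le_trans IH; apply: Vmon.
    by rewrite -addnA leq_addr.
  have Vsmall c : 0 < c -> exists N, forall k, (N <= k)%N -> V k < c.
    move=> c0.
    have ht : `|tau| < 1 by rewrite ger0_norm // ltW.
    have hc : 0 < c / (V K1 + 1) by rewrite divr_gt0 // ltr_wpDl.
    have [N0 _ HN0] := cvgr_lt _ (cvg_expr ht) _ hc.
    exists (K1 + N0)%N => k hk.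
    have hN0 := HN0 N0 (leqnn N0); rewrite /= in hN0.
    have e1 : k = (K1 + N0 + (k - (K1 + N0)))%N by rewrite subnKC.
    rewrite e1; apply: le_lt_trans (Vmono _ _) _.
    apply: le_lt_trans (hVgeo _) _.
    move: hN0; rewrite ltr_pdivlMr ?ltr_wpDl // => hN0.
    have := Vge0 K1; have : 0 <= tau ^+ N0 by rewrite exprn_ge0 // ltW.
    nra.
  split.
  +
    move=> y.
    suff -> : normZ mu (pospart (e (g xbar))) = 0 by rewrite expr0n /= sqr_ge0.
    apply/eqP; rewrite eq_le normZ_ge0 andbT; rewrite leNgt; apply/negP => ha.
    set a := normZ mu (pospart (e (g xbar))) in ha.
    have ha2 : a / 2 < a by lra.
    have [Na _ HN1] := gp_wlsc _ _ hphi (a / 2) ha2.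
    have ha0 : 0 < a / 2 by lra.
    have [Nb HN2] := Vsmall (a / 2) ha0.
    pose n := (Na + Nb).+1.
    have h1 := HN1 n (leq_trans (leq_addr Nb Na) (leqnSn _)).
    have hn : (Nb <= phi n)%N.
      by apply: leq_trans (phige n); apply: leq_trans (leq_addl Na Nb) (leqnSn _).
    have h2 := HN2 _ hn.
    have h3 := N1 (phi n) (leq_trans (ltn0Sn _) (phige n)).
    rewrite /= in h1; lra.
  +
    move=> _ y hy; rewrite leNgt; apply/negP => hgap.
    set gap := f xbar - f y.
    have gap0 : 0 < gap by rewrite /gap subr_gt0.
    have Mb0 : 0 < Mb := lt_le_trans (rhopos 0%N) (hM 0%N).
    set dl := gap * rho0 / (2 * W + 2).
    have dl0 : 0 < dl by rewrite /dl divr_gt0 ?mulr_gt0 //; lra.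
    have hdl : dl * (2 * W + 2) = gap * rho0.
      by rewrite /dl; field; apply/eqP => h; lra.
    set c := 1 + dl^-1.
    have c0 : 0 < c by rewrite /c; have := invr_gt0 dl; rewrite dl0 => /= h; lra.
    have hfl : f xbar - gap / 4 < f xbar by lra.
    have [Nf _ HNf] := f_wlsc _ _ hphi _ hfl.
    have hv2 : 0 < gap / (2 * Mb * c) by rewrite divr_gt0 // !mulr_gt0.
    have [Nv1 HNv1] := Vsmall 1 ltr01.
    have [Nv2 HNv2] := Vsmall _ hv2.
    have hg4 : 0 < gap / 4 by lra.
    have [Ne _ HNe] := cvgr_lt _ hepsc _ hg4.
    pose n := (Nf + Nv1 + Nv2 + Ne).+1.
    have pn := phige n.
    have [hn1 hn2 hn3 hn4 hk] := natfacts Nf Nv1 Nv2 Ne (phi n) pn.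
    move: (HNf n hn1) (HNv1 _ hn2) (HNv2 _ hn3) (HNe _ hn4); rewrite /= hk.
    set k := (phi n).-1 => h1 h2 h3 h4.
    have K1' := key k y.
    have K2 := N4 k y hy.
    have K3 := N5 k dl dl0.
    have K4 := N6 k.
    have hr0 := rhopos k; have hrM := hM k; have hr1 := rhoge k.
    have hV0 := Vge0 k.+1.
    have hU0 : 0 <= U k by exact: sqr_ge0.
    have hP0 : 0 <= P k (x k.+1) by exact: sqr_ge0.
    have A1 : U k - P k (x k.+1) <= dl * U k + c * V k.+1 ^+ 2.
      have hc2 : 0 <= c * V k.+1 ^+ 2 by rewrite mulr_ge0 ?sqr_ge0 // ltW.
      have [hle|hlt] := leP (P k (x k.+1)) (U k).
        have : dl * P k (x k.+1) <= dl * U k by rewrite ler_pM2l.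
        rewrite -/c in K3; lra.
      have : 0 <= dl * U k by rewrite mulr_ge0 // ltW.
      lra.
    have F1 : rho k * P k y <= rho k * U k by rewrite ler_pM2l.
    have F2 : rho k * (U k - P k (x k.+1)) <= rho k * (dl * U k + c * V k.+1 ^+ 2)
      by rewrite ler_pM2l.
    have A2 : rho k * U k <= W / rho0.
      have e1 : rho k * ((rho k ^+ 2)^-1 * W) = W / rho k by field; rewrite gt_eqF.
      apply: le_trans (_ : W / rho k <= _).
        by rewrite -e1 ler_pM2l.
      by rewrite ler_wpM2l // lef_pV2 // posrE.
    have F3 : dl * (rho k * U k) <= dl * (W / rho0) by rewrite ler_pM2l.
    have F4 : dl * (W / rho0) < gap / 2.
      have e2 : dl * (W / rho0) = (dl * W) / rho0 by rewrite mulrA.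
      rewrite e2 ltr_pdivrMr //; lra.
    have F5 : rho k * c * V k.+1 ^+ 2 < gap / 2.
      have hV2 : V k.+1 ^+ 2 <= V k.+1 by rewrite expr2 ler_piMl // ltW.
      have t1 : rho k * c * V k.+1 ^+ 2 <= Mb * c * V k.+1 ^+ 2.
        by apply: ler_wpM2r; [exact: sqr_ge0| apply: ler_wpM2r => //; exact: ltW].
      have t2 : Mb * c * V k.+1 ^+ 2 <= Mb * c * V k.+1.
        by apply: ler_wpM2l => //; rewrite mulr_ge0 // ltW.
      move: h3; rewrite ltr_pdivlMr ?mulr_gt0 // => h3.
      lra.
    have hgd : gap = f xbar - f y by [].
    lra.
-
  have big Mr : exists Kr, forall k, (Kr <= k)%N -> Mr < rho k.
    have [k hk] : exists k, Mr < rho k.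
      apply: contrapT => h; apply: unb; exists Mr => k.
      by rewrite leNgt; apply/negP => hk; apply: h; exists k.
    by exists k => j hj; exact: lt_le_trans hk (rhomono k j hj).
  split.
  +
    move=> y; rewrite leNgt; apply/negP => hlt.
    set a := normZ mu (pospart (e (g xbar))) in hlt.
    set b := normZ mu (pospart (e (g y))) in hlt.
    have a0 : 0 <= a by exact: normZ_ge0.
    have b0 : 0 <= b by exact: normZ_ge0.
    have hab : b < a by nra.
    set s := (a + b) / 2.
    have hs : s < a by rewrite /s; lra.
    have hsb : b < s by rewrite /s; lra.
    have hs0 : 0 <= s by lra.
    set dl := (s ^+ 2 - b ^+ 2) / (b ^+ 2 + 1).
    have hb1 : 0 < b ^+ 2 + 1 by have := sqr_ge0 b; lra.
    have hsb2 : b ^+ 2 < s ^+ 2 by rewrite ltr_pXn2r // ?nnegrE.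
    have dl0 : 0 < dl by rewrite /dl divr_gt0 // subr_gt0.
    have hdl : dl * (b ^+ 2 + 1) = s ^+ 2 - b ^+ 2.
      by rewrite /dl; field; rewrite gt_eqF.
    have es : s ^+ 2 = (1 + dl) * b ^+ 2 + dl by lra.
    set c := 1 + dl^-1.
    have c0 : 0 < c by rewrite /c; have := invr_gt0 dl; rewrite dl0 => /= h; lra.
    set Q := c * W.
    have Q0 : 0 <= Q by rewrite mulr_ge0 // ltW.
    have hfl : f xbar - 1 < f xbar by lra.
    have [Nf _ HNf] := f_wlsc _ _ hphi _ hfl.
    have [Ng _ HNg] := gp_wlsc _ _ hphi _ hs.
    set C := f y - f xbar + 1 + eps 0%N + Q / 2.
    have [Kr HKr] := big (1 + 2 * `|C| / dl).
    pose n := (Nf + Ng + Kr).+1.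
    have pn := phige n.
    have [hn1 hn2 hn3 hk] := natfacts2 Nf Ng Kr (phi n) pn.
    move: (HNf n hn1) (HNg n hn2); rewrite /= hk.
    set k := (phi n).-1 => h1 h2.
    have h3 := HKr k hn3.
    have K1' := key k y.
    have K2 := N2 k (x k.+1).
    have K3 := N3 k y dl dl0.
    have he := epsle k.
    have hr0 := rhopos k.
    set r := rho k in h3 K1' K3 hr0 he.
    have hC0 : 0 <= 2 * `|C| / dl by apply: divr_ge0; [rewrite mulr_ge0 | exact: ltW].
    have hr1 : 1 <= r by lra.
    have hnx : s ^+ 2 < normZ mu (pospart (e (g (x k.+1)))) ^+ 2.
      by rewrite ltr_pXn2r // ?nnegrE // normZ_ge0.
    have G1 : r * s ^+ 2 <= r * P k (x k.+1).
      by rewrite ler_pM2l //; apply: le_trans (ltW hnx) K2.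
    have G2 : r * P k y <= r * ((1 + dl) * b ^+ 2) + Q.
      have e1 : r * ((1 + dl^-1) / r ^+ 2 * W) = Q / r by rewrite /Q /c; field; rewrite !gt_eqF.
      have : Q / r <= Q by rewrite ler_pdivrMr // ler_peMr.
      have : r * P k y <= r * ((1 + dl) * b ^+ 2 + (1 + dl^-1) / r ^+ 2 * W) by rewrite ler_pM2l.
      rewrite mulrDr e1; lra.
    have G4 : 2 * C < r * dl.
      have e2 : (1 + 2 * `|C| / dl) * dl = dl + 2 * `|C| by field; rewrite gt_eqF.
      have : (1 + 2 * `|C| / dl) * dl < r * dl by rewrite ltr_pM2r.
      rewrite e2; have := ler_norm C; lra.
    rewrite es in G1.
    have hCd : C = f y - f xbar + 1 + eps 0%N + Q / 2 by [].
    lra.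
  +
    move=> _ y hy; rewrite leNgt; apply/negP => hgap.
    set gap := f xbar - f y.
    have gap0 : 0 < gap by rewrite /gap subr_gt0.
    have hfl : f xbar - gap / 4 < f xbar by lra.
    have [Nf _ HNf] := f_wlsc _ _ hphi _ hfl.
    have hg4 : 0 < gap / 4 by lra.
    have [Ne _ HNe] := cvgr_lt _ hepsc _ hg4.
    have [Kr HKr] := big (2 * W / gap + 1).
    pose n := (Nf + Ne + Kr).+1.
    have pn := phige n.
    have [hn1 hn2 hn3 hk] := natfacts3 Nf Ne Kr (phi n) pn.
    move: (HNf n hn1) (HNe _ hn2); rewrite /= hk.
    set k := (phi n).-1 => h1 h2.
    have h3 := HKr k hn3.
    have K1' := key k y.
    have K2 := N4 k y hy.
    have K4 := N6 k.
    have hr0 := rhopos k.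
    have hP0 : 0 <= P k (x k.+1) by exact: sqr_ge0.
    set r := rho k in h3 K1' K4 hr0.
    have F1 : r * P k y <= r * U k by rewrite ler_pM2l.
    have F0 : 0 <= r * P k (x k.+1) by rewrite mulr_ge0 // ltW.
    have A2 : r * U k <= W / r.
      have e1 : r * ((r ^+ 2)^-1 * W) = W / r by field; rewrite gt_eqF.
      by rewrite -e1 ler_pM2l.
    have A3 : W / r < gap / 2.
      rewrite ltr_pdivrMr //.
      have e2 : (2 * W / gap + 1) * gap = 2 * W + gap by field; rewrite gt_eqF.
      have : (2 * W / gap + 1) * gap < r * gap by rewrite ltr_pM2r.
      rewrite e2; lra.
    have hgd : gap = f xbar - f y by [].
    lra.

Qed.
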